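(* Let $G\subset\mathrm{Homeo}_+([0,1])$ be a group which has linked fixed points (i.e. is not without linked fixed points). Then there exist $h_1,h_2\in G$ and a segment $I\subset[0,1]$ such that $h_1(I)$ and $h_2(I)$ are disjoint segments contained in $I$.
   Context: For a group $G$ of homeomorphisms of $[0,1]$, a pair of successive fixed points of $G$ is a pair $\{a,b\}$, $a<b$, such that $(a,b)$ is a connected component of $[0,1]\setminus \mathrm{Fix}(g)$ for some $g\in G$. Two pairs $\{a,b\}$ and $\{c,d\}$ are linked if $(a,b)\cap\{c,d\}$ or $(c,d)\cap\{a,b\}$ consists of exactly one point. $G$ has linked fixed points if some two pairs of successive fixed points of $G$ are linked. *)

(* Defs.v *)
From Stdlib Require Import Reals.
Open Scope R_scope.

Definition I01 (x : R) : Prop := 0 <= x <= 1.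

Definition cont_on01 (f : R -> R) : Prop :=
  forall x, I01 x -> forall eps, eps > 0 ->
    exists delta, delta > 0 /\
      forall y, I01 y -> Rabs (y - x) < delta -> Rabs (f y - f x) < eps.

(* Values outside [0,1] are
   irrelevant. *)
Definition homeo_plus01 (f : R -> R) : Prop :=
  (forall x, I01 x -> I01 (f x)) /\
  cont_on01 f /\
  (exists g : R -> R,
      (forall x, I01 x -> I01 (g x)) /\ cont_on01 g /\
      (forall x, I01 x -> g (f x) = x) /\ (forall x, I01 x -> f (g x) = x)) /\
  (forall x y, I01 x -> I01 y -> x < y -> f x < f y).

(* G is a subgroup of Homeo_+([0,1]) (elements identified with functions;
   equality of maps is equality on [0,1]). *)
Definition is_group_homeo01 (G : (R -> R) -> Prop) : Prop :=
  (forall f, G f -> homeo_plus01 f) /\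
  G (fun x => x) /\
  (forall f g, G f -> G g -> G (fun x => f (g x))) /\
  (forall f, G f -> exists g, G g /\
      (forall x, I01 x -> g (f x) = x) /\ (forall x, I01 x -> f (g x) = x)).

(* (a,b) is a connected component of [0,1] \ Fix(g), with a < b:
   written out, a and b are fixed points in [0,1] and g has no fixed point
   strictly between them. *)
Definition successive_fixed (g : R -> R) (a b : R) : Prop :=
  I01 a /\ I01 b /\ a < b /\ g a = a /\ g b = b /\
  (forall x, a < x < b -> g x <> x).

Definition pair_of_successive_fixed_points (G : (R -> R) -> Prop) (a b : R) : Prop :=
  exists g, G g /\ successive_fixed g a b.

(* (a,b) ∩ {c,d} consists of exactly one point (for c < d). *)
Definition meets_exactly_once (a b c d : R) : Prop :=
  ((a < c < b) /\ ~ (a < d < b)) \/ (~ (a < c < b) /\ (a < d < b)).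

Definition linked (a b c d : R) : Prop :=
  meets_exactly_once a b c d \/ meets_exactly_once c d a b.

Definition has_linked_fixed_points (G : (R -> R) -> Prop) : Prop :=
  exists a b c d,
    pair_of_successive_fixed_points G a b /\
    pair_of_successive_fixed_points G c d /\
    linked a b c d.

(* Main.v *)
Require Import Defs.
From Stdlib Require Import Reals Lra Lia.
Open Scope R_scope.

Lemma fix_of_lim (phi : R -> R) (u : nat -> R) (L : R) :
  cont_on01 phi -> (forall n, I01 (u n)) -> I01 L ->
  (forall n, u (S n) = phi (u n)) -> Un_cv u L -> phi L = L.
Proof.
  intros Hc Hu HL Hs Hcv.
  destruct (Req_dec (phi L) L) as [E|NE]; [exact E|exfalso].
  set (eps := Rabs (phi L - L) / 2).
  assert (Heps : eps > 0).
  { unfold eps. assert (Rabs (phi L - L) > 0) by (apply Rabs_pos_lt; lra). lra. }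
  destruct (Hc L HL eps Heps) as [del [Hdel Hd]].
  destruct (Hcv (Rmin del eps)) as [N HN].
  { apply Rmin_case; lra. }
  assert (H1 := HN N (le_n _)). assert (H2 := HN (S N) (le_S _ _ (le_n _))).
  unfold Rdist in H1, H2.
  assert (Hm1 : Rmin del eps <= del) by apply Rmin_l.
  assert (Hm2 : Rmin del eps <= eps) by apply Rmin_r.
  assert (H3 := Hd (u N) (Hu N) ltac:(lra)).
  rewrite Hs in H2.
  assert (Habs : Rabs (phi L - L) <= Rabs (phi L - phi (u N)) + Rabs (phi (u N) - L)).
  { replace (phi L - L) with ((phi L - phi (u N)) + (phi (u N) - L)) by ring.
    apply Rabs_triang. }
  rewrite (Rabs_minus_sym (phi L) (phi (u N))) in Habs. unfold eps in *. lra.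
Qed.

Lemma wmono (h : R -> R) : homeo_plus01 h ->
  forall x y, I01 x -> I01 y -> x <= y -> h x <= h y.
Proof.
  intros [_ [_ [_ Hm]]] x y Hx Hy Hxy.
  destruct (Rle_lt_or_eq_dec _ _ Hxy) as [H|H].
  - left; apply Hm; auto.
  - subst; lra.
Qed.

Lemma dec_lim (phi : R -> R) (c z0 e : R) :
  homeo_plus01 phi -> I01 c -> c < e <= z0 -> z0 <= 1 -> phi z0 < z0 ->
  (forall x, c < x <= z0 -> phi x <> x) ->
  exists k, Nat.iter k phi z0 < e.
Proof.
  intros Hh Hc He Hz Hlt Hfix.
  destruct (Rlt_or_le 0 1) as [_|]; [|lra].
  apply Classical_Prop.NNPP; intro Hn.
  assert (Hge : forall k, e <= Nat.iter k phi z0).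
  { intro k. destruct (Rlt_or_le (Nat.iter k phi z0) e) as [H|H]; auto.
    exfalso; apply Hn; exists k; auto. }
  set (u := fun k => Nat.iter k phi z0).
  assert (HI : forall k, u (S k) <= u k /\ u k <= z0).
  { induction k as [|k IH].
    - simpl. unfold u; simpl. lra.
    - destruct IH as [IH1 IH2]. split.
      + unfold u; simpl. apply (wmono phi Hh).
        * split; [generalize (Hge (S k)); simpl; unfold I01 in Hc; lra|].
          unfold u in IH1, IH2; simpl in IH1; lra.
        * split; [generalize (Hge k); unfold I01 in Hc; lra| unfold u in IH2; lra].
        * exact IH1.
      + lra. }
  assert (HuI : forall k, I01 (u k)).
  { intro k; destruct (HI k); generalize (Hge k); unfold I01 in *; unfold u in *; lra. }
  destruct (decreasing_cv u) as [L HL].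
  { intro n; apply (HI n). }
  { exists (- e). intros x [i ->]. unfold opp_seq. generalize (Hge i). unfold u. lra. }
  assert (HLe : e <= L).
  { destruct (Rlt_or_le L e) as [H|H]; auto.
    destruct (HL (e - L)) as [N HN]; [lra|].
    generalize (HN N (le_n _)) (Hge N). unfold Rdist, u.
    intros H1 H2. apply Rabs_def2 in H1. lra. }
  assert (HLz : L <= u 1%nat).
  { destruct (Rlt_or_le (u 1%nat) L) as [H|H]; auto.
    destruct (HL (L - u 1%nat)) as [N HN]; [lra|].
    assert (Hd : forall n, u (S n) <= u 1%nat).
    { induction n as [|n IH]; [lra|]. destruct (HI (S n)). lra. }
    generalize (HN (S N) ltac:(lia)) (Hd N). unfold Rdist.
    intros H1 H2. apply Rabs_def2 in H1. lra. }
  assert (Hu1 : u 1%nat < z0) by (unfold u; simpl; lra).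
  assert (HLI : I01 L) by (unfold I01 in *; lra).
  assert (Hf := fix_of_lim phi u L (proj1 (proj2 Hh)) HuI HLI (fun n => eq_refl) HL).
  apply (Hfix L); [lra|exact Hf].
Qed.
Lemma inc_lim (phi : R -> R) (d z0 e : R) :
  homeo_plus01 phi -> I01 d -> z0 <= e < d -> 0 <= z0 -> z0 < phi z0 ->
  (forall x, z0 <= x < d -> phi x <> x) ->
  exists k, e < Nat.iter k phi z0.
Proof.
  intros Hh Hc He Hz Hlt Hfix.
  apply Classical_Prop.NNPP; intro Hn.
  assert (Hge : forall k, Nat.iter k phi z0 <= e).
  { intro k. destruct (Rlt_or_le e (Nat.iter k phi z0)) as [H|H]; auto.
    exfalso; apply Hn; exists k; auto. }
  set (u := fun k => Nat.iter k phi z0).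
  assert (HI : forall k, u k <= u (S k) /\ z0 <= u k).
  { induction k as [|k IH].
    - simpl. unfold u; simpl. lra.
    - destruct IH as [IH1 IH2]. split.
      + unfold u; simpl. apply (wmono phi Hh).
        * split; [unfold u in IH1, IH2; lra|].
          generalize (Hge k); unfold I01 in Hc; lra.
        * split; [unfold u in IH1, IH2; simpl in IH1; lra|].
          generalize (Hge (S k)); simpl; unfold I01 in Hc; lra.
        * exact IH1.
      + lra. }
  assert (HuI : forall k, I01 (u k)).
  { intro k; destruct (HI k); generalize (Hge k); unfold I01 in *; unfold u in *; lra. }
  destruct (growing_cv u) as [L HL].
  { intro n; apply (HI n). }
  { exists e. intros x [i ->]. generalize (Hge i). unfold u. lra. }
  assert (HLe : L <= e).
  { destruct (Rlt_or_le e L) as [H|H]; auto.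
    destruct (HL (L - e)) as [N HN]; [lra|].
    generalize (HN N (le_n _)) (Hge N). unfold Rdist, u.
    intros H1 H2. apply Rabs_def2 in H1. lra. }
  assert (HLz : u 1%nat <= L).
  { destruct (Rlt_or_le L (u 1%nat)) as [H|H]; auto.
    destruct (HL (u 1%nat - L)) as [N HN]; [lra|].
    assert (Hd : forall n, u 1%nat <= u (S n)).
    { induction n as [|n IH]; [lra|]. destruct (HI (S n)). lra. }
    generalize (HN (S N) ltac:(lia)) (Hd N). unfold Rdist.
    intros H1 H2. apply Rabs_def2 in H1. lra. }
  assert (Hu1 : z0 < u 1%nat) by (unfold u; simpl; lra).
  assert (HLI : I01 L) by (unfold I01 in *; lra).
  assert (Hf := fix_of_lim phi u L (proj1 (proj2 Hh)) HuI HLI (fun n => eq_refl) HL).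
  apply (Hfix L); [lra|exact Hf].
Qed.
Lemma iter_G (G : (R -> R) -> Prop) (g : R -> R) : is_group_homeo01 G -> G g -> forall k, G (Nat.iter k g).
Proof.
  intros [H1 [H2 [H3 H4]]] Hg k; induction k as [|k IH].
  - exact H2.
  - exact (H3 g (Nat.iter k g) Hg IH).
Qed.

Lemma iter_fix (g : R -> R) (c : R) : g c = c -> forall k, Nat.iter k g c = c.
Proof. intros H k; induction k as [|k IH]; simpl; [reflexivity|rewrite IH; exact H]. Qed.

Lemma flip (G : (R -> R) -> Prop) (f : R -> R) (x : R) : is_group_homeo01 G -> G f -> I01 x -> f x <> x ->
  exists f', G f' /\ x < f' x /\ (forall y, I01 y -> (f' y = y <-> f y = y)).
Proof.
  intros HG Hf Hx Hne.
  destruct (Rtotal_order (f x) x) as [Hl|[He|Hl]]; [|contradiction|].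
  - destruct HG as [Hh [_ [_ Hinv]]].
    destruct (Hinv f Hf) as [g [Hg [Hgf Hfg]]].
    exists g; split; [exact Hg|split].
    + destruct (Hh g Hg) as [_ [_ [_ Hm]]].
      destruct (Hh f Hf) as [Hfi _].
      rewrite <- (Hgf x Hx) at 1. apply Hm; auto.
    + intros y Hy; split; intro E.
      * transitivity (f (g y)); [rewrite E; reflexivity|apply Hfg; auto].
      * transitivity (g (f y)); [rewrite E; reflexivity|apply Hgf; auto].
  - exists f; split; [exact Hf|split; [lra|tauto]].
Qed.

Lemma flipd (G : (R -> R) -> Prop) (f : R -> R) (x : R) : is_group_homeo01 G -> G f -> I01 x -> f x <> x ->
  exists f', G f' /\ f' x < x /\ (forall y, I01 y -> (f' y = y <-> f y = y)).
Proof.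
  intros HG Hf Hx Hne.
  destruct (Rtotal_order (f x) x) as [Hl|[He|Hl]]; [|contradiction|].
  - exists f; split; [exact Hf|split; [lra|tauto]].
  - destruct HG as [Hh [_ [_ Hinv]]].
    destruct (Hinv f Hf) as [g [Hg [Hgf Hfg]]].
    exists g; split; [exact Hg|split].
    + destruct (Hh g Hg) as [_ [_ [_ Hm]]].
      destruct (Hh f Hf) as [Hfi _].
      rewrite <- (Hgf x Hx) at 2. apply Hm; auto.
    + intros y Hy; split; intro E.
      * transitivity (f (g y)); [rewrite E; reflexivity|apply Hfg; auto].
      * transitivity (g (f y)); [rewrite E; reflexivity|apply Hgf; auto].
Qed.
Definition concl (G : (R -> R) -> Prop) : Prop :=
  exists (h1 h2 : R -> R) (u v : R),
    G h1 /\ G h2 /\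
    0 <= u /\ u < v /\ v <= 1 /\
    (forall x, u <= x <= v -> u <= h1 x <= v) /\
    (forall x, u <= x <= v -> u <= h2 x <= v) /\
    (forall x y, u <= x <= v -> u <= y <= v -> h1 x <> h2 y).

Lemma smono (h : R -> R) : homeo_plus01 h ->
  forall x y, I01 x -> I01 y -> x < y -> h x < h y.
Proof. intros [_ [_ [_ Hm]]]; exact Hm. Qed.

Lemma hmap (h : R -> R) : homeo_plus01 h -> forall x, I01 x -> I01 (h x).
Proof. intros [Hm _]; exact Hm. Qed.

Lemma coreA G F g c b : is_group_homeo01 G -> G F -> G g -> c < b -> I01 c -> I01 b ->
  F b = b -> F c <> c -> g c = c -> (forall x, c < x < b -> g x <> x) -> concl G.
Proof.
  intros HG HF Hg Hcb Hc Hb Fb Fc gc gfix.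
  destruct (flip G F c HG HF Hc Fc) as [F' [HF' [F'c F'fix]]].
  assert (F'b : F' b = b) by (apply F'fix; auto).
  assert (HhF := proj1 HG F' HF').
  set (q := (c + b) / 2).
  assert (Hq : I01 q) by (unfold q, I01 in *; lra).
  assert (Hcq : c < q < b) by (unfold q; lra).
  assert (F'q1 : F' c < F' q) by (apply (smono F' HhF); auto; lra).
  assert (F'q2 : F' q < b) by (rewrite <- F'b at 1; apply (smono F' HhF); auto; lra).
  set (z0 := Rmax q (F' q)).
  assert (Hz1 : q <= z0) by apply Rmax_l.
  assert (Hz2 : F' q <= z0) by apply Rmax_r.
  assert (Hz3 : z0 < b) by (unfold z0; apply Rmax_lub_lt; lra).
  assert (Hz : I01 z0) by (unfold I01 in *; lra).
  assert (gz : g z0 <> z0) by (apply gfix; lra).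
  destruct (flipd G g z0 HG Hg Hz gz) as [g' [Hg' [g'z g'fix]]].
  assert (g'c : g' c = c) by (apply g'fix; auto).
  assert (Hhg := proj1 HG g' Hg').
  assert (g'fx : forall x, c < x <= z0 -> g' x <> x).
  { intros x Hx E. apply (gfix x); [lra|]. apply g'fix; [unfold I01 in *; lra|exact E]. }
  destruct (dec_lim g' c z0 q Hhg Hc ltac:(lra) ltac:(unfold I01 in *; lra) g'z g'fx) as [k Hk].
  assert (HGk := iter_G G g' HG Hg' k).
  assert (Hhk := proj1 HG _ HGk).
  set (h1 := fun x => Nat.iter k g' (F' x)).
  assert (HG1 : G h1) by (exact (proj1 (proj2 (proj2 HG)) _ _ HGk HF')).
  assert (Hh1 := proj1 HG _ HG1).
  assert (kc : Nat.iter k g' c = c) by (apply iter_fix; auto).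
  set (e1 := h1 c).
  assert (He1 : c < e1).
  { unfold e1, h1. rewrite <- kc at 1. apply (smono _ Hhk); auto. 
    apply (hmap _ HhF); auto. }
  assert (Hh1q : h1 q < q).
  { unfold h1. apply Rle_lt_trans with (Nat.iter k g' z0); auto.
    apply (wmono _ Hhk); auto. apply (hmap _ HhF); auto. }
  assert (Hh1cq : e1 <= h1 q) by (apply (wmono _ Hh1); auto; lra).
  destruct (dec_lim g' c z0 e1 Hhg Hc ltac:(lra) ltac:(unfold I01 in *; lra) g'z g'fx) as [m Hm].
  assert (HGm := iter_G G g' HG Hg' m).
  assert (Hhm := proj1 HG _ HGm).
  assert (mc : Nat.iter m g' c = c) by (apply iter_fix; auto).
  assert (Hmq : Nat.iter m g' q < e1).
  { apply Rle_lt_trans with (Nat.iter m g' z0); auto.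
    apply (wmono _ Hhm); auto. }
  assert (B1 : forall x, c <= x <= q -> e1 <= h1 x <= h1 q).
  { intros x Hx. assert (I01 x) by (unfold I01 in *; lra).
    split; apply (wmono _ Hh1); auto; lra. }
  assert (B2 : forall x, c <= x <= q -> c <= Nat.iter m g' x <= Nat.iter m g' q).
  { intros x Hx. assert (I01 x) by (unfold I01 in *; lra).
    split; [rewrite <- mc at 1|]; apply (wmono _ Hhm); auto; lra. }
  exists h1, (Nat.iter m g'), c, q.
  split; [exact HG1|]. split; [exact HGm|].
  split; [unfold I01 in Hc; lra|]. split; [lra|]. split; [unfold I01 in Hq; lra|].
  split; [intros x Hx; destruct (B1 x Hx); lra|].
  split; [intros x Hx; destruct (B2 x Hx); lra|].
  intros x y Hx Hy E. destruct (B1 x Hx); destruct (B2 y Hy). lra.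
Qed.
Lemma coreB G F g a d : is_group_homeo01 G -> G F -> G g -> a < d -> I01 a -> I01 d ->
  F a = a -> F d <> d -> g d = d -> (forall x, a < x < d -> g x <> x) -> concl G.
Proof.
  intros HG HF Hg Had Ha Hd Fa Fd gd gfix.
  destruct (flipd G F d HG HF Hd Fd) as [F' [HF' [F'd F'fix]]].
  assert (F'a : F' a = a) by (apply F'fix; auto).
  assert (HhF := proj1 HG F' HF').
  set (q := (a + d) / 2).
  assert (Hq : I01 q) by (unfold q, I01 in *; lra).
  assert (Hcq : a < q < d) by (unfold q; lra).
  assert (F'q1 : F' q < F' d) by (apply (smono F' HhF); auto; lra).
  assert (F'q2 : a < F' q) by (rewrite <- F'a at 1; apply (smono F' HhF); auto; lra).
  set (z0 := Rmin q (F' q)).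
  assert (Hz1 : z0 <= q) by apply Rmin_l.
  assert (Hz2 : z0 <= F' q) by apply Rmin_r.
  assert (Hz3 : a < z0) by (unfold z0; apply Rmin_glb_lt; lra).
  assert (Hz : I01 z0) by (unfold I01 in *; lra).
  assert (gz : g z0 <> z0) by (apply gfix; lra).
  destruct (flip G g z0 HG Hg Hz gz) as [g' [Hg' [g'z g'fix]]].
  assert (g'd : g' d = d) by (apply g'fix; auto).
  assert (Hhg := proj1 HG g' Hg').
  assert (g'fx : forall x, z0 <= x < d -> g' x <> x).
  { intros x Hx E. apply (gfix x); [lra|]. apply g'fix; [unfold I01 in *; lra|exact E]. }
  destruct (inc_lim g' d z0 q Hhg Hd ltac:(lra) ltac:(unfold I01 in *; lra) g'z g'fx) as [k Hk].
  assert (HGk := iter_G G g' HG Hg' k).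
  assert (Hhk := proj1 HG _ HGk).
  set (h1 := fun x => Nat.iter k g' (F' x)).
  assert (HG1 : G h1) by (exact (proj1 (proj2 (proj2 HG)) _ _ HGk HF')).
  assert (Hh1 := proj1 HG _ HG1).
  assert (kd : Nat.iter k g' d = d) by (apply iter_fix; auto).
  set (e1 := h1 d).
  assert (He1 : e1 < d).
  { unfold e1, h1. apply Rlt_le_trans with (Nat.iter k g' d); [|rewrite kd; lra].
    apply (smono _ Hhk); auto. apply (hmap _ HhF); auto. }
  assert (Hh1q : q < h1 q).
  { unfold h1. apply Rlt_le_trans with (Nat.iter k g' z0); auto.
    apply (wmono _ Hhk); auto. apply (hmap _ HhF); auto. }
  assert (Hh1cq : h1 q <= e1) by (apply (wmono _ Hh1); auto; lra).
  destruct (inc_lim g' d z0 e1 Hhg Hd ltac:(lra) ltac:(unfold I01 in *; lra) g'z g'fx) as [m Hm].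
  assert (HGm := iter_G G g' HG Hg' m).
  assert (Hhm := proj1 HG _ HGm).
  assert (md : Nat.iter m g' d = d) by (apply iter_fix; auto).
  assert (Hmq : e1 < Nat.iter m g' q).
  { apply Rlt_le_trans with (Nat.iter m g' z0); auto.
    apply (wmono _ Hhm); auto. }
  assert (B1 : forall x, q <= x <= d -> h1 q <= h1 x <= e1).
  { intros x Hx. assert (I01 x) by (unfold I01 in *; lra).
    split; apply (wmono _ Hh1); auto; lra. }
  assert (B2 : forall x, q <= x <= d -> Nat.iter m g' q <= Nat.iter m g' x <= d).
  { intros x Hx. assert (I01 x) by (unfold I01 in *; lra).
    split; [apply (wmono _ Hhm); auto; lra|]. rewrite <- md at 1. apply (wmono _ Hhm); auto; lra. }
  exists h1, (Nat.iter m g'), q, d.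
  split; [exact HG1|]. split; [exact HGm|].
  split; [unfold I01 in Hq; lra|]. split; [lra|]. split; [unfold I01 in Hd; lra|].
  split; [intros x Hx; destruct (B1 x Hx); lra|].
  split; [intros x Hx; destruct (B2 x Hx); lra|].
  intros x y Hx Hy E. destruct (B1 x Hx); destruct (B2 y Hy). lra.
Qed.
Theorem lemmal (G : (R -> R) -> Prop) :
  is_group_homeo01 G ->
  has_linked_fixed_points G ->
  exists (h1 h2 : R -> R) (u v : R),
    G h1 /\ G h2 /\
    0 <= u /\ u < v /\ v <= 1 /\
    (forall x, u <= x <= v -> u <= h1 x <= v) /\
    (forall x, u <= x <= v -> u <= h2 x <= v) /\
    (forall x y, u <= x <= v -> u <= y <= v -> h1 x <> h2 y).
Proof.
  intros HG [a [b [c [d [[f [Hf [Ia [Ib [ab [fa [fb ffix]]]]]]]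
                         [[g [Hg [Ic [Id [cd [gc [gd gfix]]]]]]] Hl]]]]]].
  change (concl G).
  destruct Hl as [[[H1 H2]|[H1 H2]]|[[H1 H2]|[H1 H2]]].
  - apply (coreA G f g c b HG Hf Hg ltac:(lra) Ic Ib fb (ffix c H1) gc).
    intros x Hx; apply gfix. split; [lra|].
    destruct (Rlt_or_le d b); [exfalso; apply H2; lra|lra].
  - apply (coreB G f g a d HG Hf Hg ltac:(lra) Ia Id fa (ffix d H2) gd).
    intros x Hx; apply gfix. split; [|lra].
    destruct (Rlt_or_le a c); [exfalso; apply H1; lra|lra].
  - apply (coreA G g f a d HG Hg Hf ltac:(lra) Ia Id gd (gfix a H1) fa).
    intros x Hx; apply ffix. split; [lra|].
    destruct (Rlt_or_le b d); [exfalso; apply H2; lra|lra].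
  - apply (coreB G g f c b HG Hg Hf ltac:(lra) Ic Ib gc (gfix b H2) fb).
    intros x Hx; apply ffix. split; [|lra].
    destruct (Rlt_or_le c a); [exfalso; apply H1; lra|lra].
Qed.
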